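(* Let $X$ be a distance-regular graph of diameter $4$ on $n$ vertices that is both bipartite and antipodal. Then $\mathrm{motion}(X)\geq 0.15\,n$.
   Context: A distance-regular graph of diameter $d$ is a connected graph such that for vertices $v,w$ at distance $i$ the numbers of neighbours of $w$ at distance $i-1,i,i+1$ from $v$ are constants depending only on $i$. It is antipodal if being at distance $d$ or equal is an equivalence relation on vertices. The motion of a graph is the minimum, over non-identity automorphisms, of the number of vertices not fixed. *)

(* Defs.v *)
From mathcomp Require Import all_boot all_fingroup.
Set Implicit Arguments. Unset Strict Implicit. Unset Printing Implicit Defensive.

Section Graphs.
Variable T : finType.
Variable e : rel T.

Definition simple_graph : Prop := irreflexive e /\ symmetric e.

Fixpoint ball (k : nat) (x : T) : {set T} :=
  match k with
  | 0 => [set x]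
  | k'.+1 => ball k' x :|: [set y | [exists z in ball k' x, e z y]]
  end.

Definition is_dist (x y : T) (k : nat) : bool :=
  (y \in ball k x) && (if k is k'.+1 then y \notin ball k' x else true).

Definition sphere (k : nat) (x : T) : {set T} := [set y | is_dist x y k].

Definition neighbours (x : T) : {set T} := [set y | e x y].

Definition connected_graph : Prop := forall x y : T, exists k, is_dist x y k.

Definition has_diameter (d : nat) : Prop :=
  connected_graph /\ (forall x y k, is_dist x y k -> k <= d) /\
  exists x y, is_dist x y d.

Definition distance_regular (d : nat) : Prop :=
  simple_graph /\ has_diameter d /\
  exists c a b : nat -> nat, forall (v w : T) (i : nat), is_dist v w i ->
     [/\ #|neighbours w :&: (if i is i'.+1 then sphere i' v else set0)| = c i,
         #|neighbours w :&: sphere i v| = a i &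
         #|neighbours w :&: sphere i.+1 v| = b i].

Definition bipartite : Prop :=
  exists col : T -> bool, forall x y, e x y -> col x != col y.

Definition antipodal (d : nat) : Prop :=
  let R x y := (x == y) || is_dist x y d in
  (forall x, R x x) /\ (forall x y, R x y -> R y x) /\
  (forall x y z, R x y -> R y z -> R x z).

Definition is_automorphism (s : {perm T}) : Prop :=
  forall x y, e (s x) (s y) = e x y.

Definition moved (s : {perm T}) : nat := #|[set x | s x != x]|.

End Graphs.

(* Main.v *)
Require Import Defs.
From mathcomp Require Import all_boot all_fingroup.
From mathcomp Require Import zify.
Set Implicit Arguments. Unset Strict Implicit. Unset Printing Implicit Defensive.


Lemma fibre_sum (T U : finType) (A : {set T}) (B : {set U}) (f : T -> U) :
  {in A, forall a, f a \in B} -> #|A| = \sum_(b in B) #|[set a in A | f a == b]|.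
Proof.
move=> fAB; rewrite -sum1_card (partition_big f (mem B)) //=.
by apply: eq_bigr => b _; rewrite -sum1dep_card.
Qed.

Lemma fibre_bound (T U : finType) (A : {set T}) (B : {set U}) (f : T -> U) m :
  {in A, forall a, f a \in B} ->
  (forall b, b \in B -> #|[set a in A | f a == b]| <= m) -> #|A| <= m * #|B|.
Proof.
move=> fAB hm; rewrite (fibre_sum fAB) mulnC -sum_nat_const.
by apply: leq_sum => b bB; apply: hm.
Qed.

Lemma card_nbr (T : finType) (e : rel T) a (B : {set T}) :
  #|neighbours e a :&: B| = \sum_(b in B) e a b.
Proof.
rewrite -sum1_card (eq_bigl (fun b => (b \in B) && e a b)); last first.
  by move=> b; rewrite !inE andbC.
by rewrite big_mkcondr /=; apply: eq_bigr => b _; case: (e a b).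
Qed.

Lemma dcount (T : finType) (e : rel T) (A B : {set T}) : symmetric e ->
  \sum_(a in A) #|neighbours e a :&: B| = \sum_(b in B) #|neighbours e b :&: A|.
Proof.
move=> sym; rewrite (eq_bigr (fun a => \sum_(b in B) e a b)); last by move=> a _; apply: card_nbr.
rewrite exchange_big /=; apply: eq_bigr => b _; rewrite card_nbr.
by apply: eq_bigr => a _; rewrite sym.
Qed.


Lemma ballS (T : finType) (e : rel T) k x y :
  (y \in ball e k.+1 x) = (y \in ball e k x) || [exists z in ball e k x, e z y].
Proof. by rewrite /= !inE. Qed.

Lemma ball0 (T : finType) (e : rel T) x y : (y \in ball e 0 x) = (y == x).
Proof. by rewrite /= inE. Qed.

Lemma ball_le (T : finType) (e : rel T) i j x : i <= j -> ball e i x \subset ball e j x.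
Proof.
elim: j => [|j IH]; first by rewrite leqn0 => /eqP ->.
rewrite leq_eqVlt => /orP[/eqP -> //|]; rewrite ltnS => /IH h.
by apply: (subset_trans h); apply/subsetP => y yb; rewrite ballS yb.
Qed.

Lemma ball_step (T : finType) (e : rel T) k x z y :
  z \in ball e k x -> e z y -> y \in ball e k.+1 x.
Proof. by move=> zb ezy; rewrite ballS; apply/orP; right; apply/existsP; exists z; rewrite zb. Qed.

Lemma ball_start (T : finType) (e : rel T) k y z x :
  e y z -> x \in ball e k z -> x \in ball e k.+1 y.
Proof.
move=> eyz; elim: k x => [|k IH] x.
  by rewrite ball0 => /eqP ->; apply: (ball_step (z:=y)); rewrite ?ball0.
rewrite ballS => /orP[/IH h|/existsP[u /andP[ub eux]]].
  by apply: (subsetP (ball_le _ _ (leqnSn _))).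
by apply: (ball_step (z:=u)) => //; apply: IH.
Qed.

Lemma ball_sym (T : finType) (e : rel T) k x y : symmetric e ->
  (y \in ball e k x) = (x \in ball e k y).
Proof.
move=> sym; suff H : forall x y, y \in ball e k x -> x \in ball e k y.
  by apply/idP/idP; apply: H.
elim: k => [|k IH] {}x {}y; first by rewrite !ball0 eq_sym.
rewrite ballS => /orP[/IH h|/existsP[z /andP[zb ezy]]].
  by apply: (subsetP (ball_le _ _ (leqnSn _))).
by apply: (ball_start (z:=z)); [rewrite sym|apply: IH].
Qed.

Lemma is_dist0 (T : finType) (e : rel T) x y : is_dist e x y 0 = (y == x).
Proof. by rewrite /is_dist ball0 andbT. Qed.

Lemma is_dist_pred (T : finType) (e : rel T) k x y :
  is_dist e x y k.+1 -> exists z, is_dist e x z k /\ e z y.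
Proof.
rewrite /is_dist ballS => /andP[/orP[->//|/existsP[z /andP[zb ezy]]] ny].
exists z; split=> //; rewrite zb /=; case: k zb ny => // k zb ny.
apply/negP => zk; case/negP: ny; exact: ball_step zk ezy.
Qed.

Lemma dist_ball (T : finType) (e : rel T) i k x y :
  is_dist e x y i -> y \in ball e k x -> i <= k.
Proof.
case: i => // i /andP[_ ny] yk; rewrite ltnNge; apply/negP => ki.
by case/negP: ny; apply: (subsetP (ball_le _ _ ki)).
Qed.

Lemma is_dist_uniq (T : finType) (e : rel T) x y i j :
  is_dist e x y i -> is_dist e x y j -> i = j.
Proof.
move=> hi hj; apply/eqP; rewrite eqn_leq.
by rewrite (dist_ball hi (proj1 (andP hj))) (dist_ball hj (proj1 (andP hi))).
Qed.

Lemma is_dist_sym (T : finType) (e : rel T) k x y : symmetric e ->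
  is_dist e x y k = is_dist e y x k.
Proof.
move=> sym; rewrite /is_dist; case: k => [|k]; first by rewrite (ball_sym _ _ _ sym).
by rewrite (ball_sym k.+1 x y sym) (ball_sym k x y sym).
Qed.

Lemma is_dist1 (T : finType) (e : rel T) x y : irreflexive e ->
  is_dist e x y 1 = e x y.
Proof.
move=> irr; rewrite /is_dist ballS !ball0; apply/idP/idP.
  case/andP=> /orP[->//|/existsP[z /andP[]]]; by rewrite ball0 => /eqP ->.
move=> exy; have ny: y != x by apply/eqP=> yx; rewrite yx irr in exy.
by rewrite ny andbT; apply/orP; right; apply/existsP; exists x; rewrite ball0 eqxx.
Qed.

Lemma parity (T : finType) (e : rel T) (col : T -> bool) k x y :
  (forall x y, e x y -> col x != col y) -> is_dist e x y k -> col y = col x (+) odd k.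
Proof.
move=> hc; elim: k y => [|k IH] y; first by rewrite is_dist0 => /eqP ->; rewrite addbF.
case/is_dist_pred=> z [/IH hz ezy]; have := hc _ _ ezy.
by rewrite hz /= addbN; case: (col y); case: (col x (+) odd k).
Qed.

Lemma ball_perm (T : finType) (e : rel T) (s : {perm T}) :
  (forall x y, e (s x) (s y) = e x y) ->
  forall k x y, (s y \in ball e k (s x)) = (y \in ball e k x).
Proof.
move=> hs; elim=> [|k IH] x y; first by rewrite !ball0 (inj_eq perm_inj).
rewrite !ballS IH; congr orb; apply/existsP/existsP => [[z /andP[zb ezy]]|[z /andP[zb ezy]]].
  exists (s^-1 z)%g; rewrite -IH permKV zb /= -hs permKV //.
by exists (s z); rewrite IH zb hs.
Qed.

Lemma dist_perm (T : finType) (e : rel T) (s : {perm T}) :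
  (forall x y, e (s x) (s y) = e x y) ->
  forall k x y, is_dist e (s x) (s y) k = is_dist e x y k.
Proof. by move=> hs [|k] x y; rewrite /is_dist !(ball_perm hs). Qed.


Definition R (T : finType) (e : rel T) x y := (x == y) || is_dist e x y 4.
Definition cls (T : finType) (e : rel T) x := [set y | R e x y].

Record Hyp (T : finType) (e : rel T) (c b : nat -> nat) (col : T -> bool) : Prop := {
  h_irr : irreflexive e; h_sym : symmetric e;
  h_conn : forall x y, exists k, is_dist e x y k;
  h_bnd : forall x y k, is_dist e x y k -> k <= 4;
  h_diam : exists x y, is_dist e x y 4;
  h_c : forall v w i, is_dist e v w i ->
     #|neighbours e w :&: (if i is i'.+1 then sphere e i' v else set0)| = c i;
  h_b : forall v w i, is_dist e v w i -> #|neighbours e w :&: sphere e i.+1 v| = b i;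
  h_col : forall x y, e x y -> col x != col y;
  h_Rsym : forall x y, R e x y -> R e y x;
  h_Rtr : forall x y z, R e x y -> R e y z -> R e x z }.

Lemma inj_card_le (T : finType) (A B : {set T}) (f : T -> T) :
  {in A &, injective f} -> {in A, forall x, f x \in B} -> #|A| <= #|B|.
Proof.
move=> inj fAB; rewrite -(card_in_imset inj); apply: subset_leq_card.
by apply/subsetP => y /imsetP[x xA ->]; apply: fAB.
Qed.

Lemma in_cls (T : finType) (e : rel T) x y : (y \in cls e x) = R e x y.
Proof. by rewrite /cls in_set. Qed.

Lemma sphere1 T e c b col (h : @Hyp T e c b col) x : sphere e 1 x = neighbours e x.
Proof. by apply/setP => y; rewrite !inE is_dist1 //; apply: h_irr h. Qed.

Lemma degree T e c b col (h : @Hyp T e c b col) x : #|neighbours e x| = b 0.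
Proof.
have d0 : is_dist e x x 0 by rewrite is_dist0.
by have := h_b h d0; rewrite (sphere1 h) setIid.
Qed.

Lemma common2 T e c b col (h : @Hyp T e c b col) x y :
  is_dist e x y 2 -> #|neighbours e x :&: neighbours e y| = c 2.
Proof. by move=> d; have := h_c h d; rewrite (sphere1 h) setIC. Qed.

Lemma no_common4 T e c b col (h : @Hyp T e c b col) x y w :
  is_dist e x y 4 -> e x w -> e w y -> False.
Proof.
case/andP=> _ ny exw ewy; case/negP: ny.
apply: (subsetP (ball_le _ _ (_ : 2 <= 3))) => //.
apply: (ball_step (z:=w)) => //; apply: (ball_step (z:=x)) => //.
by rewrite ball0.
Qed.

Lemma Rcol T e c b col (h : @Hyp T e c b col) x y : R e x y -> col x = col y.
Proof.
case/orP=> [/eqP -> //|d]; rewrite (parity (h_col h) d) /=.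
by case: (col x).
Qed.

Lemma dist2 T e c b col (h : @Hyp T e c b col) x y :
  col x = col y -> x != y -> ~~ R e x y -> is_dist e x y 2.
Proof.
move=> cxy nxy nR; have [i d] := h_conn h x y.
have := parity (h_col h) d; rewrite cxy -{1}(addbF (col y)) => /addbI /esym oi.
have := h_bnd h d.
case: i d oi => [|[|[|[|[|i]]]]] d //= oi _.
- by rewrite is_dist0 eq_sym (negbTE nxy) in d.
- by rewrite /R d orbT in nR.
Qed.

Lemma uniqR T e c b col (h : @Hyp T e c b col) p y y' :
  e p y -> e p y' -> R e y y' -> y = y'.
Proof.
move=> epy epy' /orP[/eqP //|d]; exfalso.
by apply: (no_common4 h d _ epy'); rewrite (h_sym h).
Qed.

Lemma b3pos T e c b col (h : @Hyp T e c b col) : 0 < b 3.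
Proof.
have [x0 [y0 d]] := h_diam h; have [w [dw ew]] := is_dist_pred d.
rewrite -(h_b h dw) card_gt0; apply/set0Pn; exists y0.
by rewrite !inE ew.
Qed.

Lemma exnbr T e c b col (h : @Hyp T e c b col) p q :
  col p != col q -> exists y, e p y && R e q y.
Proof.
move=> cpq; have [i d] := h_conn h q p.
have := parity (h_col h) d => cp; have := h_bnd h d.
have oi : odd i by move: cpq; rewrite cp; case: (col q); case: (odd i).
case: i d cp oi => [|[|[|[|[|i]]]]] d //= cp oi _.
- exists q; apply/andP; split; last by rewrite /R eqxx.
  by rewrite (h_sym h) -(is_dist1 _ _ (h_irr h)).
- have := b3pos h; rewrite -(h_b h d) card_gt0 => /set0Pn[y].
  by rewrite !inE => /andP[ey dy]; exists y; rewrite ey /R dy orbT.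
Qed.

Definition nb (T : finType) (e : rel T) q p := odflt p [pick y in neighbours e p :&: cls e q].

Lemma nbP T e c b col (h : @Hyp T e c b col) p q :
  col p != col q -> e p (nb e q p) /\ R e q (nb e q p).
Proof.
move=> cpq; rewrite /nb; case: pickP => [y|] /=; first by rewrite !inE => /andP[-> ->].
have [y /andP[ey ry]] := exnbr h cpq; move/(_ y); by rewrite !inE ey ry.
Qed.

Lemma kge2 T e c b col (h : @Hyp T e c b col) : 1 < b 0.
Proof.
have [x0 [y0 d]] := h_diam h; have [w [dw ew]] := is_dist_pred d.
have [z [dz ez]] := is_dist_pred dw.
rewrite -(degree h w) (cardsD1 y0) !inE ew add1n ltnS card_gt0; apply/set0Pn.
exists z; rewrite !inE (h_sym h) ez andbT; apply/eqP => zy; move: dz; rewrite zy => dz.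
by have := is_dist_uniq d dz.
Qed.

Lemma mu_le T e c b col (h : @Hyp T e c b col) : 2 * c 2 <= b 0.
Proof.
have [x0 [y0 d]] := h_diam h; have d' : is_dist e y0 x0 4 by rewrite (is_dist_sym 4 y0 x0 (h_sym h)).
have [w [dw ew]] := is_dist_pred d'; have [z [dz ez]] := is_dist_pred dw.
have dxz : is_dist e x0 z 2.
  apply: (dist2 h).
  - by rewrite (parity (h_col h) d') (parity (h_col h) dz).
  - by apply/eqP => xz; move: dz; rewrite -xz => dz; have := is_dist_uniq d' dz.
  - rewrite /R; apply/norP; split.
      by apply/eqP => xz; move: dz; rewrite -xz => dz; have := is_dist_uniq d' dz.
    apply/negP => d4; have zb : z \in ball e 2 x0.
      apply: (ball_step (z:=w)); last by rewrite (h_sym h).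
      by apply: (ball_step (z:=x0)); [rewrite ball0|rewrite (h_sym h)].
    by have := dist_ball d4 zb.
have cA := common2 h dxz; have cB := common2 h dz.
rewrite -(degree h z) mul2n -addnn -{1}cA -cB.
have -> : #|neighbours e x0 :&: neighbours e z| + #|neighbours e y0 :&: neighbours e z|
   = #|(neighbours e x0 :&: neighbours e z) :|: (neighbours e y0 :&: neighbours e z)|.
  rewrite cardsU; have -> : (neighbours e x0 :&: neighbours e z) :&: (neighbours e y0 :&: neighbours e z) = set0.
    apply/setP => t; rewrite !inE; apply/negP => /andP[/andP[ext _] /andP[eyt _]].
    by apply: (no_common4 h d ext); rewrite (h_sym h).
  by rewrite cards0 subn0.
apply: subset_leq_card; apply/subsetP => t; rewrite !inE (h_sym h z).
by case/orP=> /andP[_ ->].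
Qed.

Lemma cls_le T e c b col (h : @Hyp T e c b col) p q :
  col p != col q -> #|cls e p| <= #|cls e q|.
Proof.
move=> cpq.
have inj : {in cls e p &, injective (nb e q)}.
  move=> p1 p2 p1c p2c eqf.
  have Rp1 : R e p p1 by rewrite -in_cls.
  have Rp2 : R e p p2 by rewrite -in_cls.
  have c1 : col p1 != col q by rewrite -(Rcol h Rp1).
  have c2 : col p2 != col q by rewrite -(Rcol h Rp2).
  have [e1 _] := nbP h c1; have [e2 _] := nbP h c2.
  have e1' : e (nb e q p1) p1 by rewrite (h_sym h).
  have e2' : e (nb e q p1) p2 by rewrite eqf (h_sym h).
  have R12 : R e p1 p2 by apply: (h_Rtr h (h_Rsym h Rp1) Rp2).
  exact: (uniqR h e1' e2' R12).
apply: (inj_card_le inj) => p1 p1c.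
have Rp1 : R e p p1 by rewrite -in_cls.
have c1 : col p1 != col q by rewrite -(Rcol h Rp1).
by rewrite in_cls; case: (nbP h c1).
Qed.

Lemma R_perm (T : finType) (e : rel T) (s : {perm T}) :
  (forall x y, e (s x) (s y) = e x y) -> forall x y, R e (s x) (s y) = R e x y.
Proof. by move=> hs x y; rewrite /R (inj_eq perm_inj) (dist_perm hs). Qed.


Lemma Rrefl (T : finType) (e : rel T) x : R e x x.
Proof. by rewrite /R eqxx. Qed.

Lemma R4 (T : finType) (e : rel T) x y : R e x y -> x != y -> is_dist e x y 4.
Proof. by case/orP => [/eqP -> |//]; rewrite eqxx. Qed.

Lemma sub_card_le (T : finType) (A B : {set T}) n : A \subset B -> #|B| = n -> #|A| <= n.
Proof. by move=> sAB <-; apply: subset_leq_card. Qed.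

Lemma sub_card_ge (T : finType) (A B : {set T}) n : A \subset B -> #|A| = n -> n <= #|B|.
Proof. by move=> sAB <-; apply: subset_leq_card. Qed.

Lemma fixed_cls T e c b col (h : @Hyp T e c b col) (s : {perm T})
  (hs : forall x y, e (s x) (s y) = e x y) x y :
  R e x y -> R e x (s x) -> R e y (s y).
Proof.
move=> rxy rxs; have rs : R e (s x) (s y) by rewrite (R_perm hs).
have r1 := h_Rtr h (h_Rsym h rxy) rxs.
exact: (h_Rtr h r1 rs).
Qed.

Lemma M4_nofix T e c b col (h : @Hyp T e c b col) (s : {perm T})
  (hs : forall x y, e (s x) (s y) = e x y) x w :
  s x != x -> R e x (s x) -> e x w -> s w != w.
Proof.
move=> mx rx exw; apply/eqP => sw.
have d : is_dist e x (s x) 4 by apply: (R4 rx); rewrite eq_sym.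
have ews : e w (s x) by rewrite (h_sym h) -{1}sw hs.
exact: (no_common4 h d exw ews).
Qed.

Lemma fix_nbr T e c b col (h : @Hyp T e c b col) (s : {perm T})
  (hs : forall x y, e (s x) (s y) = e x y) z w :
  s z = z -> e z w -> R e w (s w) -> s w = w.
Proof.
move=> sz ezw rw; have ezs : e z (s w) by rewrite -{1}sz hs.
by apply/esym; apply: (uniqR h ezw ezs rw).
Qed.

Definition Fx (T : finType) (s : {perm T}) := [set x | s x == x].

Lemma moved_fix_le T e c b col (h : @Hyp T e c b col) (s : {perm T})
  (hs : forall x y, e (s x) (s y) = e x y) (hcol : forall x, col (s x) = col x) x :
  s x != x -> #|neighbours e x :&: Fx s| <= c 2.
Proof.
move=> mx; case rx: (R e x (s x)).
  apply: (@leq_trans 0) => //; rewrite leqn0 cards_eq0; apply/eqP/setP => w.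
  rewrite !inE; apply/negbTE/negP => /andP[exw sw].
  by have := M4_nofix h hs mx rx exw; rewrite sw.
have d : is_dist e x (s x) 2.
  by apply: (dist2 h); [rewrite hcol| rewrite eq_sym| rewrite rx].
apply: (sub_card_le _ (common2 h d)); apply/subsetP => w; rewrite !inE.
by case/andP => exw /eqP sw; rewrite exw -{1}sw hs.
Qed.


Lemma card_split (T : finType) (A B : {set T}) : #|A :&: B| + #|A :&: ~: B| = #|A|.
Proof. by rewrite -setDE cardsID. Qed.

Lemma lemK T e c b col (h : @Hyp T e c b col) (s : {perm T})
  (hs : forall x y, e (s x) (s y) = e x y) z x z' :
  s z = z -> R e z x -> s x != x -> col z' = col z -> ~~ R e z z' -> R e z' (s z') ->
  2 * #|neighbours e z :&: Fx s| <= b 0.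
Proof.
move=> sz rzx mx cz' nzz' rz'.
have rzs : R e z (s z) by rewrite sz Rrefl.
have rx : R e x (s x) := fixed_cls h hs rzx rzs.
have cx : col x = col z by rewrite (Rcol h rzx).
set f := nb e z'.
have colw : forall w, e z w -> col w != col z'.
  by move=> w ezw; rewrite cz' eq_sym; apply: (h_col h).
have fP : forall w, e z w -> e w (f w) /\ R e z' (f w).
  by move=> w ezw; apply: (nbP h (colw w ezw)).
have dzp : forall p, R e z' p -> is_dist e z p 2.
  move=> p rp; apply: (dist2 h).
  - by rewrite -(Rcol h rp) cz'.
  - by apply/eqP => zp; move: rp; rewrite -zp => rp; case/negP: nzz'; exact: (h_Rsym h rp).
  - by apply/negP => rzp; case/negP: nzz'; apply: (h_Rtr h rzp); exact: (h_Rsym h rp).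
have dxp : forall p, R e z' p -> is_dist e x p 2.
  move=> p rp; apply: (dist2 h).
  - by rewrite -(Rcol h rp) cz' cx.
  - apply/eqP => xp; move: rp; rewrite -xp => rp; case/negP: nzz'.
    by apply: (h_Rtr h rzx); exact: (h_Rsym h rp).
  - apply/negP => rxp; case/negP: nzz'; apply: (h_Rtr h rzx).
    by apply: (h_Rtr h rxp); exact: (h_Rsym h rp).
have i1 : c 2 * #|cls e z'| <= b 0.
  rewrite -(degree h z) (@fibre_sum _ _ (neighbours e z) (cls e z') f); last first.
    by move=> w; rewrite !inE => ezw; case: (fP w ezw).
  rewrite mulnC -sum_nat_const; apply: leq_sum => p; rewrite !inE => rp.
  apply: (sub_card_ge _ (common2 h (dzp p rp))); apply/subsetP => w; rewrite !inE.
  case/andP => ezw epw; rewrite ezw /=; have [ewf rf] := fP w ezw.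
  have epw' : e w p by rewrite (h_sym h).
  have rpf : R e p (f w) := h_Rtr h (h_Rsym h rp) rf.
  apply/eqP; exact: (esym (uniqR h epw' ewf rpf)).
have i2 : #|neighbours e z :&: Fx s| <= c 2 * #|cls e z' :&: Fx s|.
  apply: (@fibre_bound _ _ _ _ f).
    move=> w; rewrite !inE => /andP[ezw /eqP sw]; have [ewf rf] := fP w ezw.
    rewrite rf /=; apply/eqP; apply: (fix_nbr h hs sw ewf).
    exact: (fixed_cls h hs rf rz').
  move=> p; rewrite !inE => /andP[rp _].
  apply: (sub_card_le _ (common2 h (dzp p rp))); apply/subsetP => w; rewrite !inE.
  case/andP => /andP[ezw _] /eqP fw; rewrite ezw /=; have [ewf _] := fP w ezw.
  by rewrite (h_sym h) -fw.
set Y := [set y in neighbours e x | R e y (s y)].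
have i3 : #|neighbours e z :&: Fx s| <= #|Y|.
  have cxw : forall w, e z w -> col x != col w.
    by move=> w ezw; rewrite cx; apply: (h_col h).
  apply: (@inj_card_le _ _ _ (fun w => nb e w x)).
    move=> w1 w2; rewrite !inE => /andP[ez1 _] /andP[ez2 _] eqn.
    have [e1 r1] := nbP h (cxw w1 ez1); have [e2 r2] := nbP h (cxw w2 ez2).
    apply: (uniqR h ez1 ez2); apply: (h_Rtr h r1); rewrite eqn; exact: (h_Rsym h r2).
  move=> w; rewrite !inE => /andP[ezw /eqP sw]; have [e1 r1] := nbP h (cxw w ezw).
  rewrite e1 /=; apply: (fixed_cls h hs r1); by rewrite sw Rrefl.
have i4 : #|Y| <= c 2 * #|cls e z' :&: ~: Fx s|.
  have colx : forall y, e x y -> col y != col z'.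
    by move=> y exy; rewrite cz' -cx eq_sym; apply: (h_col h).
  apply: (@fibre_bound _ _ _ _ f).
    move=> y; rewrite !inE => /andP[exy ry]; have [eyf rf] := nbP h (colx y exy).
    rewrite rf /=; apply: (M4_nofix h hs _ _ eyf).
      exact: (M4_nofix h hs mx rx exy).
    exact: ry.
  move=> q; rewrite !inE => /andP[rq _].
  apply: (sub_card_le _ (common2 h (dxp q rq))); apply/subsetP => y; rewrite !inE.
  case/andP => /andP[exy _] /eqP fy; rewrite exy /=; have [eyf _] := nbP h (colx y exy).
  by rewrite (h_sym h) -fy.
have := card_split (cls e z') (Fx s).
move=> hsplit.
rewrite mul2n -addnn; apply: leq_trans i1.
rewrite -hsplit mulnDr; apply: leq_add => //; exact: (leq_trans i3 i4).
Qed.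


Lemma step1 T e c b col (h : @Hyp T e c b col) (s : {perm T})
  (hs : forall x y, e (s x) (s y) = e x y) (hcol : forall x, col (s x) = col x) z x0 :
  s z = z -> b 0 < 2 * #|neighbours e z :&: Fx s| -> s x0 != x0 -> col x0 = col z ->
  exists x, R e z x && (s x != x).
Proof.
move=> sz bad mx0 cx0.
case: (boolP [exists x, R e z x && (s x != x)]) => [/existsP //|/existsPn hall]; exfalso.
have fixcl : forall x, R e z x -> s x = x.
  by move=> x rzx; have := hall x; rewrite rzx /= negbK => /eqP.
have cxw : forall w, e z w -> col x0 != col w by move=> w ezw; rewrite cx0; apply: (h_col h).
have le1 : #|neighbours e z :&: Fx s| <= #|neighbours e x0 :&: Fx s|.
  apply: (@inj_card_le _ _ _ (fun w => nb e w x0)).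
    move=> w1 w2; rewrite !inE => /andP[ez1 _] /andP[ez2 _] eqn.
    have [e1 r1] := nbP h (cxw w1 ez1); have [e2 r2] := nbP h (cxw w2 ez2).
    apply: (uniqR h ez1 ez2); apply: (h_Rtr h r1); rewrite eqn; exact: (h_Rsym h r2).
  move=> w; rewrite !inE => /andP[ezw /eqP sw]; have [e1 r1] := nbP h (cxw w ezw).
  rewrite e1 /=; apply/negPn/negP => my.
  have ry : R e (nb e w x0) (s (nb e w x0)) by apply: (fixed_cls h hs r1); rewrite sw Rrefl.
  have cy : col (nb e w x0) != col z by rewrite -cx0 eq_sym; apply: (h_col h).
  have [eq rq] := nbP h cy.
  have := M4_nofix h hs my ry eq; by rewrite (fixcl _ rq) eqxx.
have le2 := moved_fix_le h hs hcol mx0.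
have := mu_le h; have := leq_trans le1 le2; move: bad; lia.
Qed.

Lemma exists_moved_col T e c b col (h : @Hyp T e c b col) (s : {perm T})
  (hs : forall x y, e (s x) (s y) = e x y) (hcol : forall x, col (s x) = col x) m cc :
  s m != m -> exists x, s x != x /\ col x = cc.
Proof.
move=> mm; case: (boolP [exists x, (s x != x) && (col x == cc)]).
  by case/existsP => x /andP[mx /eqP cx]; exists x.
move/existsPn => hall; exfalso.
have cm : col m != cc by have := hall m; rewrite mm.
have : b 0 <= c 2.
  rewrite -(degree h m); apply: leq_trans (moved_fix_le h hs hcol mm).
  apply: subset_leq_card; apply/subsetP => w; rewrite !inE => ew; rewrite ew /=.
  move: (hall w); rewrite negb_and negbK => /orP[//|nc].
  move: nc (h_col h ew) cm; clear hall; by case: (col w); case: (col m); case: cc.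
have := mu_le h; have := kge2 h; lia.
Qed.

Lemma bad_class T e c b col (h : @Hyp T e c b col) (s : {perm T})
  (hs : forall x y, e (s x) (s y) = e x y) (hcol : forall x, col (s x) = col x) z x0 :
  s z = z -> b 0 < 2 * #|neighbours e z :&: Fx s| -> s x0 != x0 ->
  forall z', s z' = z' -> col z' = col z -> R e z z'.
Proof.
move=> sz bad mx0 z' sz' cz'.
have [x1 [mx1 cx1]] := exists_moved_col h hs hcol (col z) mx0.
have [x /andP[rzx mx]] := step1 h hs hcol sz bad mx1 cx1.
apply/negPn/negP => nzz'.
have rz' : R e z' (s z') by rewrite sz' Rrefl.
have := lemK h hs sz rzx mx cz' nzz' rz'; move: bad; lia.
Qed.

Lemma bad_bound T e c b col (h : @Hyp T e c b col) (s : {perm T})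
  (hs : forall x y, e (s x) (s y) = e x y) (hcol : forall x, col (s x) = col x) x0 cc :
  s x0 != x0 ->
  #|[set z | (s z == z) && (b 0 < 2 * #|neighbours e z :&: Fx s|)] :&: [set z | col z == cc]|
  <= #|~: Fx s :&: [set z | col z == cc]|.
Proof.
move=> mx0.
case: (set_0Vmem ([set z | (s z == z) && (b 0 < 2 * #|neighbours e z :&: Fx s|)] :&: [set z | col z == cc])) => [-> |[z]].
  by rewrite cards0.
rewrite !inE => /andP[/andP[/eqP sz bad] /eqP cz].
have hcl := bad_class h hs hcol sz bad mx0.
have k2 := kge2 h.
have : 0 < #|neighbours e z| by rewrite (degree h); lia.
rewrite card_gt0 => /set0Pn[w]; rewrite inE => ezw.
have : 0 < #|neighbours e w :\ z|.
  have := cardsD1 z (neighbours e w); rewrite (degree h) inE (h_sym h) ezw /=; lia.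
rewrite card_gt0 => /set0Pn[x']; rewrite !inE => /andP[nx' ewx'].
have cw : col z != col w := h_col h ezw.
have cwx : col w != col x' := h_col h ewx'.
have cx' : col x' = col z by move: cw cwx; case: (col z); case: (col w); case: (col x').
have nR : ~~ R e z x'.
  rewrite /R negb_or eq_sym nx' /=; apply/negP => d4.
  have xb : x' \in ball e 2 z.
    apply: (ball_step (z:=w)) => //; apply: (ball_step (z:=z)) => //; by rewrite ball0.
  by have := dist_ball d4 xb.
apply: (@leq_trans #|cls e z|).
  apply: subset_leq_card; apply/subsetP => y; rewrite !inE => /andP[/andP[/eqP sy _] /eqP cy].
  by apply: hcl => //; rewrite cy.
apply: (leq_trans (cls_le h cw)); apply: (leq_trans (cls_le h cwx)).
apply: subset_leq_card; apply/subsetP => p; rewrite !inE => rp.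
have cp : col p = col x' := esym (Rcol h rp).
rewrite cp cx' cz eqxx andbT; apply/negP => /eqP sp.
case/negP: nR; apply: (h_Rtr h (hcl p sp _)); first by rewrite cp.
exact: (h_Rsym h rp).
Qed.


Lemma sum_sub (T : finType) (A B : {set T}) (g : T -> nat) :
  A \subset B -> \sum_(z in A) g z <= \sum_(z in B) g z.
Proof.
move=> sAB; rewrite [X in _ <= X](bigID (mem A)) /=.
apply: (leq_trans _ (leq_addr _ _)); rewrite [X in _ <= X](eq_bigl (mem A)) //.
by move=> z /=; apply/andP/idP => [[]//|zA]; split=> //; apply: (subsetP sAB).
Qed.

Lemma main_count T e c b col (h : @Hyp T e c b col) (s : {perm T})
  (hs : forall x y, e (s x) (s y) = e x y) (hcol : forall x, col (s x) = col x) x0 :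
  s x0 != x0 -> #|Fx s| <= 2 * #|~: Fx s|.
Proof.
move=> mx0.
set Good := [set z in (Fx s) | 2 * #|neighbours e z :&: (Fx s)| <= b 0].
set Bad := [set z | (s z == z) && (b 0 < 2 * #|neighbours e z :&: Fx s|)].
have k2 := kge2 h; have mu := mu_le h.
have sumM : \sum_(x in (~: Fx s)) #|neighbours e x :&: (Fx s)| <= c 2 * #|(~: Fx s)|.
  rewrite mulnC -sum_nat_const; apply: leq_sum => x; rewrite !inE => mx.
  exact: (moved_fix_le h hs hcol mx).
have dc := dcount (Fx s) (~: Fx s) (h_sym h).
have sumG : b 0 * #|Good| <= 2 * \sum_(z in (Fx s)) #|neighbours e z :&: (~: Fx s)|.
  rewrite mulnC -sum_nat_const big_distrr /=.
  apply: (leq_trans _ (sum_sub _ (_ : Good \subset (Fx s)))); last first.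
    by apply/subsetP => z; rewrite inE => /andP[].
  apply: leq_sum => z; rewrite inE => /andP[zF gz].
  have := card_split (neighbours e z) (Fx s); rewrite (degree h) => sp.
  move: gz; rewrite -sp; lia.
have Gle : #|Good| <= #|(~: Fx s)|.
  have : b 0 * #|Good| <= b 0 * #|(~: Fx s)|.
    apply: (leq_trans sumG); rewrite dc; apply: (@leq_trans (2 * (c 2 * #|(~: Fx s)|))).
      by rewrite leq_mul2l sumM orbT.
    by rewrite mulnA leq_mul2r mu orbT.
  by rewrite leq_mul2l; case/orP => // /eqP b0; rewrite b0 in k2.
have Ble : #|Bad| <= #|(~: Fx s)|.
  have split1 := card_split Bad [set z | col z == true].
  have split2 := card_split (~: Fx s) [set z | col z == true].
  have eqC : ~: [set z | col z == true] = [set z | col z == false].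
    by apply/setP => z; rewrite !inE; case: (col z).
  rewrite eqC in split1 split2.
  rewrite -split1 -split2; apply: leq_add; exact: (bad_bound h hs hcol _ mx0).
have FGB : #|(Fx s)| <= #|Good| + #|Bad|.
  have sub : Fx s \subset Good :|: Bad; last first.
    by apply: (leq_trans (subset_leq_card sub)); rewrite cardsU; exact: leq_subr.
  apply/subsetP => z zF; rewrite !inE; move: zF; rewrite inE => /eqP sz.
  by rewrite sz eqxx /=; case: leqP.
lia.
Qed.

Unset Implicit Arguments. Set Strict Implicit.

Theorem proposition5p6 (T : finType) (e : rel T) :
  distance_regular e 4 -> bipartite e -> antipodal e 4 ->
  forall s : {perm T}, is_automorphism e s -> s != 1%g ->
    3 * #|T| <= 20 * moved s.
Proof.
move=> [[irr sym] [[conn [bnd diam]] [c [a [b hd]]]]] [col hcol] hant s hs s1.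
have [Rs Rt] : (forall x y, R e x y -> R e y x) /\ (forall x y z, R e x y -> R e y z -> R e x z).
  by case: hant => _ [h1 h2]; split.
have h : Hyp e c b col.
  split=> //.
  - by move=> v w i d; case: (hd v w i d).
  - by move=> v w i d; case: (hd v w i d).
have [x0 mx0] : exists x0, s x0 != x0.
  case: (boolP [exists x, s x != x]) => [/existsP //| /existsPn hall].
  case/negP: s1; apply/eqP/permP => x; rewrite perm1; apply/eqP.
  by have := hall x; rewrite negbK.
case: (boolP [exists z, s z == z]) => [/existsP [z /eqP sz] | /existsPn hnone].
  have hcol' : forall x, col (s x) = col x.
    move=> x; have [i d] := conn z x.
    have d' : is_dist e z (s x) i by rewrite -{1}sz (dist_perm hs).
    by rewrite (parity hcol d) (parity hcol d').
  have mc := main_count h hs hcol' mx0.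
  have -> : moved s = #|~: Fx s|.
    by rewrite /moved; apply: eq_card => x; rewrite !inE.
  have := cardsC (Fx s); lia.
have -> : moved s = #|T|.
  rewrite /moved -cardsT; apply: eq_card => x; rewrite !inE; exact: hnone.
lia.
Qed.
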